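(* Assume $n^{2/3}$ is an integer. Consider Algorithm ProxSAGA (described in the context) with $b=n^{2/3}$ and $\eta=1/(5L)$, run for $T\ge1$ iterations. Then the output $x_a$ satisfies $$\mathbb E\big[\|\mathcal G_\eta(x_a)\|^2\big]\le \frac{50L\,(F(x^0)-F(x^* ))}{3T},$$ where $x^*$ is an optimal solution of $\min_x F(x)$.
   Context: Setting: Let $n,d\ge 1$ be integers and $[n]=\{1,\dots,n\}$. Let $f_1,\dots,f_n:\mathbb R^d\to\mathbb R$ be differentiable (possibly nonconvex) functions, each $L$-smooth for some $L>0$, i.e. $\|\nabla f_i(x)-\nabla f_i(y)\|\le L\|x-y\|$ for all $x,y\in\mathbb R^d$ and $i\in[n]$. Let $f=\frac1n\sum_{i=1}^n f_i$. Let $h:\mathbb R^d\to\mathbb R\cup\{+\infty\}$ be proper, lower semicontinuous and convex, with closed domain. Let $F=f+h$, and let $x^*$ be a global minimizer of $F$ on $\mathbb R^d$ (assumed to exist). For $\eta>0$, $\mathrm{prox}_{\eta h}(x):=\arg\min_{y\in\mathbb R^d}\big(h(y)+\frac1{2\eta}\|y-x\|^2\big)$, and the gradient mapping is $\mathcal G_\eta(x):=\frac1\eta\big[x-\mathrm{prox}_{\eta h}(x-\eta\nabla f(x))\big]$. Algorithm ProxSAGA$(x^0,T,b,\eta)$: Given $x^0\in\mathbb R^d$, positive integers $T,b$ and $\eta>0$, set $\alpha^0_i=x^0$ for all $i\in[n]$. For $t=0,1,\dots$ let $g^t=\frac1n\sum_{i=1}^n\nabla f_i(\alpha^t_i)$.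 For $t=0,\dots,T-1$: draw two multisets $I_t,J_t$, each consisting of $b$ indices drawn independently and uniformly at random from $[n]$ (with replacement; $I_t$, $J_t$ independent of each other and of all previous draws); set $v^t=\frac1b\sum_{i\in I_t}\big(\nabla f_i(x^t)-\nabla f_i(\alpha^t_i)\big)+g^t$ and $x^{t+1}=\mathrm{prox}_{\eta h}(x^t-\eta v^t)$; set $\alpha^{t+1}_j=x^t$ for $j\in J_t$ and $\alpha^{t+1}_j=\alpha^t_j$ for $j\notin J_t$. The output $x_a$ is chosen uniformly at random from $\{x^0,\dots,x^{T-1}\}$. Expectations are over all randomness of the algorithm. *)

(* Defs.v *)
From Stdlib Require Import Reals ClassicalEpsilon.
From mathcomp Require Import all_boot.
Set Implicit Arguments. Unset Strict Implicit. Unset Printing Implicit Defensive.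
Local Open Scope R_scope.

Definition vec (d : nat) := 'I_d -> R.
Definition vadd d (x y : vec d) : vec d := fun k => x k + y k.
Definition vsub d (x y : vec d) : vec d := fun k => x k - y k.
Definition vscale d (a : R) (x : vec d) : vec d := fun k => a * x k.
Definition inner d (x y : vec d) : R := \big[Rplus/0]_(k < d) (x k * y k).
Definition norm2 d (x : vec d) : R := inner x x.
Definition norm d (x : vec d) : R := sqrt (norm2 x).
Definition vsum d (m : nat) (F : 'I_m -> vec d) : vec d :=
  fun k => \big[Rplus/0]_(i < m) F i k.

Definition has_gradient d (f : vec d -> R) (g : vec d -> vec d) : Prop :=
  forall x eps, 0 < eps -> exists delta, 0 < delta /\
    forall y, norm (vsub y x) < delta ->
      Rabs (f y - f x - inner (g x) (vsub y x)) <= eps * norm (vsub y x).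

Definition L_smooth d (L : R) (g : vec d -> vec d) : Prop :=
  forall x y, norm (vsub (g x) (g y)) <= L * norm (vsub x y).

(* Extended reals R ∪ {+oo}: option R, with None = +oo *)
Definition ole (u v : option R) : Prop :=
  match u, v with
  | _, None => True
  | Some a, Some b => a <= b
  | None, Some _ => False
  end.
Definition oaddR (u : option R) (r : R) : option R := option_map (fun a => a + r) u.
Definition Rlt_o (a : R) (u : option R) : Prop :=
  match u with Some c => a < c | None => True end.

Definition proper_fn d (h : vec d -> option R) : Prop := exists x, h x <> None.
Definition convex_fn d (h : vec d -> option R) : Prop :=
  forall x y a b t, h x = Some a -> h y = Some b -> 0 <= t <= 1 ->
    exists c, h (vadd (vscale t x) (vscale (1 - t) y)) = Some c /\
              c <= t * a + (1 - t) * b.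
Definition lsc_fn d (h : vec d -> option R) : Prop :=
  forall x a, Rlt_o a (h x) ->
    exists delta, 0 < delta /\
      forall y, norm (vsub y x) < delta -> Rlt_o a (h y).
Definition closed_dom d (h : vec d -> option R) : Prop :=
  forall x, (forall eps, 0 < eps -> exists y, h y <> None /\ norm (vsub y x) < eps) ->
    h x <> None.

Definition is_prox d (eta : R) (h : vec d -> option R) (x p : vec d) : Prop :=
  forall y, ole (oaddR (h p) (norm2 (vsub p x) / (2 * eta)))
                (oaddR (h y) (norm2 (vsub y x) / (2 * eta))).
(* prox_{eta h}(x) := argmin (chosen by Hilbert epsilon; unique under the
   standing assumptions) *)
Definition prox d (eta : R) (h : vec d -> option R) (x : vec d) : vec d :=
  epsilon (inhabits x) (fun p => is_prox eta h x p).

Definition favg d (n : nat) (f : 'I_n -> vec d -> R) (x : vec d) : R :=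
  (1 / INR n) * \big[Rplus/0]_(i < n) f i x.
Definition gradavg d (n : nat) (gf : 'I_n -> vec d -> vec d) (x : vec d) : vec d :=
  vscale (1 / INR n) (vsum (fun i => gf i x)).

Definition grad_map d (eta : R) (gradf : vec d -> vec d) (h : vec d -> option R)
  (x : vec d) : vec d :=
  vscale (1 / eta) (vsub x (prox eta h (vsub x (vscale eta (gradf x))))).

Definition is_global_min d (f : vec d -> R) (h : vec d -> option R) (xs : vec d) : Prop :=
  forall y, ole (oaddR (h xs) (f xs)) (oaddR (h y) (f y)).

(* one iteration's randomness: the b-tuples I_t and J_t of indices in [n] *)
Definition draw (n b : nat) := ({ffun 'I_b -> 'I_n} * {ffun 'I_b -> 'I_n})%type.
(* state: (x^t, (alpha^t_i)_i) *)
Definition state d (n : nat) := (vec d * ('I_n -> vec d))%type.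

Definition saga_step d (n b : nat) (eta : R) (gf : 'I_n -> vec d -> vec d)
  (h : vec d -> option R) (s : state d n) (D : draw n b) : state d n :=
  let (x, al) := s in
  let (I, J) := D in
  let g := vscale (1 / INR n) (vsum (fun i => gf i (al i))) in
  let v := vadd (vscale (1 / INR b)
                  (vsum (fun j : 'I_b => vsub (gf (I j) x) (gf (I j) (al (I j)))))) g in
  (prox eta h (vsub x (vscale eta v)),
   fun i => if [exists j, J j == i] then x else al i).

Definition saga_x d (n b : nat) (eta : R) (gf : 'I_n -> vec d -> vec d)
  (h : vec d -> option R) (x0 : vec d) (T : nat) (w : {ffun 'I_T -> draw n b})
  (k : nat) : vec d :=
  fst (foldl (saga_step eta gf h) (x0, fun _ => x0)
             (take k [seq w i | i <- enum 'I_T])).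

Definition Expect (Omega : finType) (X : Omega -> R) : R :=
  (\big[Rplus/0]_(w : Omega) X w) / INR #|{: Omega}|.

(* Main.v *)
Require Import Defs.
From HB Require Import structures.
From Stdlib Require Import Reals Lra Lia Psatz ClassicalEpsilon FunctionalExtensionality.
From mathcomp Require Import all_boot zify.
Set Implicit Arguments. Unset Strict Implicit. Unset Printing Implicit Defensive.
Local Open Scope R_scope.

HB.instance Definition _ := Monoid.isComLaw.Build R 0 Rplus (fun a b c => esym (Rplus_assoc a b c)) Rplus_comm Rplus_0_l.

Notation "\rsum_ ( i | P ) F" := (\big[Rplus/0]_(i | P) F) (at level 41, F at level 41, i at level 50).

Lemma rsum_scal (I : finType) (P : pred I) c (F : I -> R) :
  c * \big[Rplus/0]_(i | P i) F i = \big[Rplus/0]_(i | P i) (c * F i).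
Proof.
apply: (big_rec2 (fun x y => c * x = y)); first ring.
by move=> i x y _ <-; ring.
Qed.

Lemma rsum_le (I : finType) (P : pred I) (F G : I -> R) :
  (forall i, P i -> F i <= G i) ->
  \big[Rplus/0]_(i | P i) F i <= \big[Rplus/0]_(i | P i) G i.
Proof.
move=> H; apply: (big_rec2 (fun x y => x <= y)); first lra.
move=> i x y Pi Hxy; have := H i Pi; lra.
Qed.

Lemma rsum_ge0 (I : finType) (P : pred I) (F : I -> R) :
  (forall i, P i -> 0 <= F i) -> 0 <= \big[Rplus/0]_(i | P i) F i.
Proof.
move=> H; apply: (big_rec (fun x => 0 <= x)); first lra.
move=> i x Pi Hx; have := H i Pi; lra.
Qed.

Lemma rsum_const (I : finType) (c : R) :
  \big[Rplus/0]_(i : I) c = INR #|I| * c.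
Proof.
rewrite big_const; elim: #|I| => [|k IH]; first (simpl; ring).
rewrite iterS IH S_INR; ring.
Qed.

Lemma rsum_opp (I : finType) (P : pred I) (F : I -> R) :
  \big[Rplus/0]_(i | P i) (- F i) = - \big[Rplus/0]_(i | P i) F i.
Proof.
apply: (big_rec2 (fun x y => x = - y)); first ring.
by move=> i x y _ ->; ring.
Qed.

Lemma rsum_split (I : finType) (P : pred I) (F G : I -> R) :
  \big[Rplus/0]_(i | P i) (F i + G i) = \big[Rplus/0]_(i | P i) F i + \big[Rplus/0]_(i | P i) G i.
Proof. by rewrite big_split. Qed.

Section Vec.
Variable d : nat.
Implicit Types (x y z u w : vec d).

Lemma innerC x y : inner x y = inner y x.
Proof. rewrite /inner; apply: eq_bigr => k _; ring. Qed.
Lemma innerDl x y z : inner (vadd x y) z = inner x z + inner y z.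
Proof. rewrite /inner -big_split; apply: eq_bigr => k _; rewrite /vadd /=; ring. Qed.
Lemma innerBl x y z : inner (vsub x y) z = inner x z - inner y z.
Proof.
rewrite /inner /Rminus -rsum_opp -big_split; apply: eq_bigr => k _ /=; rewrite /vsub /=; ring.
Qed.
Lemma innerZl a x z : inner (vscale a x) z = a * inner x z.
Proof. rewrite /inner rsum_scal; apply: eq_bigr => k _; rewrite /vscale; ring. Qed.
Lemma innerDr x y z : inner z (vadd x y) = inner z x + inner z y.
Proof. by rewrite innerC innerDl !(innerC z). Qed.
Lemma innerBr x y z : inner z (vsub x y) = inner z x - inner z y.
Proof. by rewrite innerC innerBl !(innerC z). Qed.
Lemma innerZr a x z : inner z (vscale a x) = a * inner z x.
Proof. by rewrite innerC innerZl (innerC z). Qed.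
Lemma norm2_ge0 x : 0 <= norm2 x.
Proof. apply: rsum_ge0 => k _; nra. Qed.
Lemma norm2_sq x : norm x * norm x = norm2 x.
Proof. rewrite /norm sqrt_sqrt //; exact: norm2_ge0. Qed.
Lemma norm_ge0 x : 0 <= norm x.
Proof. exact: sqrt_pos. Qed.

Lemma young x y {a} : 0 < a -> inner x y <= a / 2 * norm2 x + / (2 * a) * norm2 y.
Proof.
move=> Ha; have := norm2_ge0 (vsub (vscale a x) y).
rewrite /norm2 !innerBl !innerBr !innerZl !innerZr (innerC y x) => H.
rewrite /norm2.
have -> : a/2*inner x x + /(2*a)*inner y y = /(2*a) * (a*a*inner x x + inner y y) by field; lra.
have -> : inner x y = /(2*a) * (2*a*inner x y) by field; lra.
apply Rmult_le_compat_l; [left; apply Rinv_0_lt_compat; lra | lra].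
Qed.

Lemma frac_lt1 t : 0 <= t -> t / (2 * (t + 1)) < 1.
Proof.
move=> Ht; apply Rmult_lt_reg_r with (2*(t+1)); first lra.
rewrite /Rdiv Rmult_assoc Rinv_l; lra.
Qed.

Lemma cauchy_schwarz x y : inner x y <= norm x * norm y.
Proof.
have [Hx|Hx] := Req_dec (norm x) 0.
  have Hx2 : norm2 x = 0 by rewrite -norm2_sq Hx; ring.
  have Hy := norm2_ge0 y.
  suff : forall a, 0 < a -> inner x y <= / (2 * a) * norm2 y.
    move=> H; rewrite Hx Rmult_0_l.
    case: (Rle_lt_dec (inner x y) 0) => // Hpos.
    have Hya : 0 < norm2 y + 1 by lra.
    have := H ((norm2 y + 1) / inner x y) (Rdiv_lt_0_compat _ _ Hya Hpos).
    have -> : / (2 * ((norm2 y + 1) / inner x y)) * norm2 y = inner x y * (norm2 y / (2 * (norm2 y + 1))) by field; lra.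
    move=> H'.
    have : norm2 y / (2 * (norm2 y + 1)) < 1.
      by apply: frac_lt1.
    nra.
  move=> a Ha; have := young x y Ha; rewrite Hx2; lra.
have Hxp : 0 < norm x by have := norm_ge0 x; lra.
have [Hy|Hy] := Req_dec (norm y) 0.
  rewrite innerC.
  have Hy2 : norm2 y = 0 by rewrite -norm2_sq Hy; ring.
  have Hx' := norm2_ge0 x.
  suff : forall a, 0 < a -> inner y x <= / (2 * a) * norm2 x.
    move=> H; rewrite Hy Rmult_0_r.
    case: (Rle_lt_dec (inner y x) 0) => // Hpos.
    have Hya : 0 < norm2 x + 1 by lra.
    have := H ((norm2 x + 1) / inner y x) (Rdiv_lt_0_compat _ _ Hya Hpos).
    have -> : / (2 * ((norm2 x + 1) / inner y x)) * norm2 x = inner y x * (norm2 x / (2 * (norm2 x + 1))) by field; lra.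
    move=> H'.
    have : norm2 x / (2 * (norm2 x + 1)) < 1.
      by apply: frac_lt1.
    nra.
  move=> a Ha; have := young y x Ha; rewrite Hy2; lra.
have Hyp : 0 < norm y by have := norm_ge0 y; lra.
have := young x y (Rdiv_lt_0_compat _ _ Hyp Hxp).
rewrite -!norm2_sq.
have -> : norm y / norm x / 2 * (norm x * norm x) + / (2 * (norm y / norm x)) * (norm y * norm y)
  = norm x * norm y by field; lra.
done.
Qed.

Lemma norm2_add x y : norm2 (vadd x y) = norm2 x + 2 * inner x y + norm2 y.
Proof. rewrite /norm2 innerDl !innerDr (innerC y x); ring. Qed.
Lemma norm2_sub x y : norm2 (vsub x y) = norm2 x - 2 * inner x y + norm2 y.
Proof. rewrite /norm2 innerBl !innerBr (innerC y x); ring. Qed.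
Lemma norm2_scale a x : norm2 (vscale a x) = a * a * norm2 x.
Proof. rewrite /norm2 innerZl innerZr; ring. Qed.

Lemma norm_scale a x : norm (vscale a x) = Rabs a * norm x.
Proof.
rewrite /norm norm2_scale sqrt_mult_alt; last nra.
by rewrite -/(Rsqr a) sqrt_Rsqr_abs.
Qed.
End Vec.

Section Descent.
Variable d : nat.
Implicit Types (x y z u w : vec d).

Lemma vsub_line x u t h :
  vsub (vadd x (vscale (t + h) u)) (vadd x (vscale t u)) = vscale h u.
Proof. apply: functional_extensionality => k; rewrite /vsub /vadd /vscale; ring. Qed.

Lemma phi_deriv (f : vec d -> R) g x u t :
  has_gradient f g ->
  derivable_pt_lim (fun s => f (vadd x (vscale s u))) t
                   (inner (g (vadd x (vscale t u))) u).
Proof.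
move=> Hg eps Heps.
set z := vadd x (vscale t u).
have Hnu := norm_ge0 u.
have He' : 0 < eps / (2 * (norm u + 1)) by apply: Rdiv_lt_0_compat; lra.
have [del [Hdel H]] := Hg z _ He'.
have Hd' : 0 < del / (norm u + 1) by apply: Rdiv_lt_0_compat; lra.
exists (mkposreal _ Hd') => h Hh0 Hh /=.
have Hsub := vsub_line x u t h.
have Hn : norm (vscale h u) = Rabs h * norm u by rewrite norm_scale.
have Hah : 0 < Rabs h by apply: Rabs_pos_lt.
have Hlt : norm (vsub (vadd x (vscale (t + h) u)) z) < del.
  rewrite /z Hsub Hn.
  have : Rabs h * (norm u + 1) < del.
    have := Hh; move/(Rmult_lt_compat_r (norm u + 1)) => /(_ ltac:(lra)).
    by rewrite /Rdiv Rmult_assoc Rinv_l ?Rmult_1_r; lra.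
  nra.
have := H _ Hlt; rewrite /z Hsub Hn innerZr => H1.
set D := f (vadd x (vscale (t + h) u)) - f (vadd x (vscale t u)).
set l := inner (g (vadd x (vscale t u))) u.
rewrite -/D -/l in H1.
have -> : D / h - l = (D - h * l) / h by field.
rewrite /Rdiv Rabs_mult Rabs_inv.
apply Rmult_lt_reg_r with (Rabs h) => //.
rewrite Rmult_assoc Rinv_l; last lra.
rewrite Rmult_1_r.
apply: (Rle_lt_trans _ _ _ H1).
have : eps / (2 * (norm u + 1)) * norm u < eps.
  have -> : eps / (2 * (norm u + 1)) * norm u = eps * (norm u / (2 * (norm u + 1))) by field; lra.
  have := frac_lt1 Hnu; nra.
nra.
Qed.

Lemma descent (f : vec d -> R) g L x y :
  has_gradient f g -> L_smooth L g -> 0 <= L ->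
  f y <= f x + inner (g x) (vsub y x) + L / 2 * norm2 (vsub y x).
Proof.
move=> Hg HL HL0.
set u := vsub y x.
set A := inner (g x) u.
set K := L / 2 * norm2 u.
pose phi := fun s => f (vadd x (vscale s u)).
pose psi := fun s => phi s - A * s - K * (s * s).
have Dpsi : forall t, derivable_pt_lim psi t
   (inner (g (vadd x (vscale t u))) u - A * 1 - K * (1 * t + t * 1)).
  move=> t.
  have D1 := @phi_deriv f g x u t Hg.
  have D2 := derivable_pt_lim_scal id A t 1 (derivable_pt_lim_id t).
  have D3 := derivable_pt_lim_scal _ K t _
               (derivable_pt_lim_mult id id t 1 1 (derivable_pt_lim_id t) (derivable_pt_lim_id t)).
  exact: (derivable_pt_lim_minus _ _ _ _ _ (derivable_pt_lim_minus _ _ _ _ _ D1 D2) D3).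
pose pr := fun t => exist (fun l => derivable_pt_abs psi t l) _ (Dpsi t).
have [c [Hc Hc01]] := MVT_cor1 psi 0 1 pr Rlt_0_1.
rewrite /= in Hc.
have Hder : inner (g (vadd x (vscale c u))) u - A * 1 - K * (1 * c + c * 1) <= 0.
  have Hi : inner (g (vadd x (vscale c u))) u - inner (g x) u = inner u (vsub (g (vadd x (vscale c u))) (g x)) by rewrite innerBr !(innerC u).
  rewrite /A.
  have := cauchy_schwarz u (vsub (g (vadd x (vscale c u))) (g x)).
  have := HL (vadd x (vscale c u)) x.
  have -> : vsub (vadd x (vscale c u)) x = vscale c u.
    by apply: functional_extensionality => k; rewrite /vsub /vadd /vscale; ring.
  rewrite norm_scale Rabs_right; last lra.
  rewrite /K -norm2_sq => H1 H2.
  have := norm_ge0 u; have := norm_ge0 (vsub (g (vadd x (vscale c u))) (g x)).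
  nra.
have E0 : psi 0 = f x.
  rewrite /psi /phi.
  have -> : vadd x (vscale 0 u) = x.
    by apply: functional_extensionality => k; rewrite /vadd /vscale; ring.
  ring.
have E1 : psi 1 = f y - A - K.
  rewrite /psi /phi.
  have -> : vadd x (vscale 1 u) = y.
    by apply: functional_extensionality => k; rewrite /vadd /vscale /u /vsub; ring.
  ring.
rewrite -/u -/A -/K.
nra.
Qed.
End Descent.

Lemma le_of_le_eps a b : (forall e, 0 < e -> a <= b + e) -> a <= b.
Proof.
move=> H; case: (Rle_lt_dec a b) => // Hab.
have := H ((a - b) / 2) ltac:(lra); lra.
Qed.

Lemma small_s A B C : 0 <= C -> (forall s, 0 < s <= 1 -> A <= B + s * C) -> A <= B.
Proof.
move=> HC H; case: (Rle_lt_dec A B) => // HAB.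
pose s := Rmin 1 ((A - B) / (2 * (C + 1))).
have Hs1 : s <= 1 by apply: Rmin_l.
have Hs2 : s <= (A - B) / (2 * (C + 1)) by apply: Rmin_r.
have Hs0 : 0 < s.
  rewrite /s; apply: Rmin_glb_lt; first lra.
  apply: Rdiv_lt_0_compat; lra.
have := H s (conj Hs0 Hs1).
have : s * (2 * (C + 1)) <= A - B.
  have := Rmult_le_compat_r (2 * (C + 1)) _ _ ltac:(lra) Hs2.
  by rewrite /Rdiv Rmult_assoc Rinv_l; lra.
nra.
Qed.

Lemma sq_le_nonneg a b : 0 <= b -> a * a <= b * b -> a <= b.
Proof. move=> Hb H; case: (Rle_lt_dec a b) => // Hab; nra. Qed.

Lemma sq_lt_nonneg a b : 0 <= b -> a * a < b * b -> a < b.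
Proof. move=> Hb H; case: (Rlt_le_dec a b) => // Hab; nra. Qed.

Lemma eps_index e : 0 < e -> exists N : nat, forall k : nat, (N <= k)%N -> / (INR k + 1) < e.
Proof.
move=> He; have [N [HN HN0]] := archimed_cor1 e He.
exists N => k Hk.
have HNk : INR N <= INR k by apply: le_INR; apply/leP.
have HN0' : 0 < INR N by apply: lt_0_INR; lia.
apply: Rle_lt_trans HN; apply: Rinv_le_contravar => //; lra.
Qed.

Section Geo.
Variable d : nat.
Implicit Types (x y z u w : vec d).

Lemma norm_triangle x y : norm (vadd x y) <= norm x + norm y.
Proof.
apply: sq_le_nonneg; first by have := norm_ge0 x; have := norm_ge0 y; lra.
rewrite norm2_sq norm2_add -!norm2_sq.
have := cauchy_schwarz x y; lra.
Qed.

Lemma coord_sq x (i : 'I_d) : x i * x i <= norm2 x.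
Proof.
rewrite /norm2 /inner (bigD1 i) //=.
have : 0 <= \big[Rplus/0]_(i0 < d | i0 != i) (x i0 * x i0) by apply: rsum_ge0 => k _; nra.
move=> H; rewrite -{1}(Rplus_0_r (x i * x i)); apply: Rplus_le_compat_l; exact: H.
Qed.

Lemma coord_le x (i : 'I_d) : Rabs (x i) <= norm x.
Proof.
apply: sq_le_nonneg; first exact: norm_ge0.
rewrite norm2_sq -Rabs_mult Rabs_right; last nra.
exact: coord_sq.
Qed.

Lemma norm2_le_coords x C : (forall i, x i * x i <= C) -> norm2 x <= INR d * C.
Proof.
move=> H; rewrite /norm2 /inner.
apply: Rle_trans (rsum_le (P := xpredT) (G := fun _ => C) (fun i _ => H i)) _.
by rewrite rsum_const card_ord; lra.
Qed.

Lemma vsub_split x y w : vsub x y = vadd (vsub x w) (vsub w y).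
Proof. apply: functional_extensionality => k; rewrite /vsub /vadd; ring. Qed.

Lemma norm_vsub_sym x y : norm (vsub x y) = norm (vsub y x).
Proof.
rewrite /norm; congr sqrt; rewrite !norm2_sub innerC; ring.
Qed.
End Geo.

Section ProxExist.
Variable d : nat.
Variable eta : R.
Variable h : vec d -> option R.
Hypothesis Heta : 0 < eta.
Hypothesis Hprop : proper_fn h.
Hypothesis Hconv : convex_fn h.
Hypothesis Hlsc : lsc_fn h.
Implicit Types (x y z u w : vec d).

Lemma h_lower : exists y0 h0 del, 0 < del /\ h y0 = Some h0 /\
  forall y a, h y = Some a -> h0 - 1 - 2 / del * norm (vsub y y0) <= a.
Proof.
have [y0 Hy0] := Hprop.
case Eh0: (h y0) => [h0|] //.
have [del [Hdel Hn]] := @Hlsc y0 (h0 - 1) ltac:(rewrite Eh0 /=; lra).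
exists y0, h0, del; split => //; split => // y a Ha.
have Hr0 := norm_ge0 (vsub y y0).
have Hpos : 0 <= 2 / del * norm (vsub y y0).
  apply: Rmult_le_pos => //; apply: Rlt_le; apply: Rdiv_lt_0_compat; lra.
case: (Rlt_le_dec (norm (vsub y y0)) del) => Hr.
  have := Hn y Hr; rewrite Ha /=; lra.
set r := norm (vsub y y0) in Hr Hpos Hr0 *.
have Hrp : 0 < r by lra.
set t := del / (2 * r).
have Ht0 : 0 < t by apply: Rdiv_lt_0_compat; lra.
have Htr : t * (2 * r) = del by rewrite /t; field; lra.
have Ht1 : 0 <= t <= 1 by split; nra.
have [c [Hc Hcle]] := @Hconv y y0 a h0 t Ha Eh0 Ht1.
have Hz : vsub (vadd (vscale t y) (vscale (1 - t) y0)) y0 = vscale t (vsub y y0).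
  by apply: functional_extensionality => k; rewrite /vsub /vadd /vscale; ring.
have Hzn : norm (vsub (vadd (vscale t y) (vscale (1 - t) y0)) y0) < del.
  rewrite Hz norm_scale Rabs_right; last lra.
  rewrite -/r; nra.
have := Hn _ Hzn; rewrite Hc /= => Hc2.
have H1 : t * (a - h0) > -1 by nra.
have H2 : del * (a - h0) > - (2 * r) by nra.
have -> : 2 / del * r = (2 * r) / del by field; lra.
have : (2 * r) / del >= - (a - h0).
  apply: Rle_ge; apply: (Rmult_le_reg_r del) => //.
  rewrite /Rdiv Rmult_assoc Rinv_l; lra.
lra.
Qed.

Definition qf w y := norm2 (vsub y w) / (2 * eta).

Lemma qf_ge0 w y : 0 <= qf w y.
Proof. rewrite /qf; apply: Rmult_le_pos; [exact: norm2_ge0|]; apply: Rlt_le; apply: Rinv_0_lt_compat; lra. Qed.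

Lemma phi_lower w : exists M, forall y a, h y = Some a -> M <= a + qf w y.
Proof.
have [y0 [h0 [del [Hdel [Hy0 Hlow]]]]] := h_lower.
exists (h0 - 1 - 2 / del * norm (vsub w y0) - 2 * eta / (del * del)) => y a Ha.
have := Hlow y a Ha.
have Htri := norm_triangle (vsub y w) (vsub w y0).
rewrite -vsub_split in Htri.
set s := norm (vsub y w) in Htri *.
have Hs0 : 0 <= s by exact: norm_ge0.
have Hq : qf w y = s * s / (2 * eta) by rewrite /qf /s norm2_sq.
rewrite Hq.
set k := / del.
have Hk : 0 < k by apply: Rinv_0_lt_compat.
have -> : 2 / del = 2 * k by rewrite /k; field; lra.
have -> : 2 * eta / (del * del) = 2 * eta * k * k by rewrite /k; field; lra.
have Hsq : s * s / (2 * eta) - 2 * k * s + 2 * eta * k * k >= 0.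
  have -> : s * s / (2 * eta) - 2 * k * s + 2 * eta * k * k = (s - 2 * eta * k) * (s - 2 * eta * k) / (2 * eta) by field; lra.
  apply: Rle_ge; rewrite /Rdiv; apply: Rmult_le_pos; [exact: Rle_0_sqr|]; apply: Rlt_le; apply: Rinv_0_lt_compat; lra.
have Hw0 := norm_ge0 (vsub w y0).
nra.
Qed.

Lemma midpoint_identity w y1 y2 :
  norm2 (vsub (vadd (vscale (1/2) y1) (vscale (1 - 1/2) y2)) w)
  = (norm2 (vsub y1 w) + norm2 (vsub y2 w)) / 2 - norm2 (vsub y1 y2) / 4.
Proof.
have E1 : vsub (vadd (vscale (1/2) y1) (vscale (1 - 1/2) y2)) w
   = vadd (vscale (1/2) (vsub y1 w)) (vscale (1/2) (vsub y2 w)).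
  by apply: functional_extensionality => k; rewrite /vsub /vadd /vscale; field.
have E2 : vsub y1 y2 = vsub (vsub y1 w) (vsub y2 w).
  by apply: functional_extensionality => k; rewrite /vsub; ring.
rewrite E1 E2 norm2_add (norm2_sub (vsub y1 w)) !norm2_scale innerZl innerZr; field.
Qed.

Lemma prox_exists w : exists p, is_prox eta h w p.
Proof.
have [M HM] := phi_lower w.
pose E := fun r => exists y a, h y = Some a /\ r = - (a + qf w y).
have HEb : bound E.
  by exists (- M) => r [y [a [Ha ->]]]; have := HM y a Ha; lra.
have HEn : exists r, E r.
  have [y0 Hy0] := Hprop; case E0 : (h y0) => [a0|] //.
  by exists (- (a0 + qf w y0)), y0, a0.
have [lb [Hub Hleast]] := completeness E HEb HEn.
set m := - lb.
have Hm1 : forall y a, h y = Some a -> m <= a + qf w y.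
  move=> y a Ha; have := Hub (- (a + qf w y)) (ex_intro _ y (ex_intro _ a (conj Ha erefl))).
  rewrite /m; lra.
have Hm2 : forall e, 0 < e -> exists y a, h y = Some a /\ a + qf w y < m + e.
  move=> e He; apply: NNPP => Hne.
  have : lb <= lb - e.
    apply: Hleast => r [y [a [Ha ->]]].
    case: (Rle_lt_dec (- (a + qf w y)) (lb - e)) => // Hlt.
    exfalso; apply: Hne; exists y, a; split => //; rewrite /m; lra.
  lra.
pose ek := fun k : nat => / (INR k + 1).
have Hek : forall k, 0 < ek k.
  move=> k; apply: Rinv_0_lt_compat; have := pos_INR k; lra.
have Hseq : forall k, exists y, exists a, h y = Some a /\ a + qf w y < m + ek k.
  move=> k; exact: Hm2.
pose ys := fun k => proj1_sig (constructive_indefinite_description _ (Hseq k)).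
have Hys : forall k, exists a, h (ys k) = Some a /\ a + qf w (ys k) < m + ek k.
  move=> k; exact: (proj2_sig (constructive_indefinite_description _ (Hseq k))).
have Hcb : forall k l, norm2 (vsub (ys k) (ys l)) <= 4 * eta * (ek k + ek l).
  move=> k l.
  have [ak [Hak Hk]] := Hys k; have [al [Hal Hl]] := Hys l.
  have Hhalf : 0 <= 1/2 <= 1 by lra.
  have [c [Hc Hcle]] := @Hconv (ys k) (ys l) ak al (1/2) Hak Hal Hhalf.
  have := Hm1 _ _ Hc.
  rewrite /qf midpoint_identity in Hk Hl *.
  rewrite /qf in Hk Hl.
  set N := norm2 (vsub (ys k) (ys l)).
  set nk := norm2 (vsub (ys k) w) in Hk *.
  set nl := norm2 (vsub (ys l) w) in Hl *.
  move=> H.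
  have HN : N / (8 * eta) <= (ek k + ek l) / 2.
    have -> : N / (8 * eta) = (nk / (2 * eta) + nl / (2 * eta)) / 2 - ((nk + nl) / 2 - N / 4) / (2 * eta) by field; lra.
    lra.
  have : N = (N / (8 * eta)) * (8 * eta) by field; lra.
  nra.
have Hcauchy : forall i : 'I_d, Cauchy_crit (fun k => ys k i).
  move=> i e He.
  have Hee : 0 < e * e / (8 * eta) by apply: Rdiv_lt_0_compat; nra.
  have [N HN] := eps_index Hee.
  exists N => k l Hk Hl; rewrite /Rdist.
  have Hkk := HN k (introT leP Hk); have Hll := HN l (introT leP Hl).
  have Hc := Hcb k l.
  have Hco : (ys k i - ys l i) * (ys k i - ys l i) <= norm2 (vsub (ys k) (ys l)) := coord_sq (vsub (ys k) (ys l)) i.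
  have Habs : Rabs (ys k i - ys l i) * Rabs (ys k i - ys l i) < e * e.
    rewrite -Rabs_mult Rabs_right; last (have := Rle_0_sqr (ys k i - ys l i); rewrite /Rsqr; lra).
    have : 4 * eta * (ek k + ek l) < e * e.
      have : ek k + ek l < 2 * (e * e / (8 * eta)) by rewrite /ek; lra.
      have -> : 2 * (e * e / (8 * eta)) = e * e / (4 * eta) by field; lra.
      move=> H; have := Rmult_lt_compat_l (4 * eta) _ _ ltac:(lra) H.
      have -> : 4 * eta * (e * e / (4 * eta)) = e * e by field; lra.
      done.
    lra.
  apply: sq_lt_nonneg => //; lra.
pose p := fun i : 'I_d => proj1_sig (R_complete _ (Hcauchy i)).
have Hp : forall i, Un_cv (fun k => ys k i) (p i).
  move=> i; exact: (proj2_sig (R_complete _ (Hcauchy i))).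
have Hrate : forall k, norm2 (vsub (ys k) p) <= INR d * (8 * eta * ek k).
  move=> k; apply: norm2_le_coords => i.
  change ((ys k i - p i) * (ys k i - p i) <= 8 * eta * ek k).
  have Hb : Rabs (ys k i - p i) <= sqrt (8 * eta * ek k).
    apply: le_of_le_eps => e He.
    have [N HN] := Hp i e He.
    pose l := maxn N k.
    have HlN : (l >= N)%coq_nat by apply/leP; rewrite leq_maxl.
    have Hlk : (k <= l)%N by rewrite leq_maxr.
    have H1 := HN l HlN; rewrite /Rdist in H1.
    have Hekl : ek l <= ek k.
      rewrite /ek; apply: Rinv_le_contravar; first (have := pos_INR k; lra).
      have : INR k <= INR l by apply: le_INR; apply/leP.
      lra.
    have Hc := Hcb k l.
    have Hco : (ys k i - ys l i) * (ys k i - ys l i) <= norm2 (vsub (ys k) (ys l)) := coord_sq (vsub (ys k) (ys l)) i.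
    have Hsq : Rabs (ys k i - ys l i) <= sqrt (8 * eta * ek k).
      apply: sq_le_nonneg; first exact: sqrt_pos.
      rewrite sqrt_sqrt; last (have := Hek k; nra).
      rewrite -Rabs_mult Rabs_right; last (have := Rle_0_sqr (ys k i - ys l i); rewrite /Rsqr; lra).
      have := Hek k; have := Hek l; nra.
    have := Rabs_triang (ys k i - ys l i) (ys l i - p i).
    have -> : ys k i - ys l i + (ys l i - p i) = ys k i - p i by ring.
    lra.
  have Hs0 := sqrt_pos (8 * eta * ek k).
  have := sqrt_sqrt (8 * eta * ek k) ltac:(have := Hek k; nra).
  have Ha0 := Rabs_pos (ys k i - p i).
  move=> Hss.
  have := Rmult_le_compat _ _ _ _ Ha0 Ha0 Hb Hb.
  rewrite -Rabs_mult Hss => H; apply: Rle_trans (Rle_abs _) H.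
have Hpm : exists ap, h p = Some ap /\ ap + qf w p <= m.
  apply: NNPP => Hneg.
  have [g [Hg0 Hlev]] : exists g, 0 < g /\ Rlt_o (m + 2 * g - qf w p) (h p).
    case Ehp : (h p) => [ap|].
      have Hgt : m < ap + qf w p.
        case: (Rlt_le_dec m (ap + qf w p)) => // Hle.
        by exfalso; apply: Hneg; exists ap.
      exists ((ap + qf w p - m) / 3); split; first (apply: Rdiv_lt_0_compat; lra).
      rewrite /=; lra.
    by exists 1; split; [lra|].
  have [del1 [Hdel1 Hn1]] := @Hlsc p _ Hlev.
  pose del2 := g * eta / (norm (vsub p w) + 1).
  have Hpw := norm_ge0 (vsub p w).
  have Hdel2 : 0 < del2 by apply: Rdiv_lt_0_compat; nra.
  pose del := Rmin del1 del2.
  have Hdel : 0 < del by apply: Rmin_glb_lt.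
  have Hdd : 0 < Rmin (del * del / (INR d * 8 * eta + 1)) g.
    apply: Rmin_glb_lt => //; apply: Rdiv_lt_0_compat; first nra.
    have := pos_INR d; nra.
  have [N HN] := eps_index Hdd.
  have HeN := HN N (leqnn N).
  have HeN1 : ek N < g := Rlt_le_trans _ _ _ HeN (Rmin_r _ _).
  have HeN2 : ek N < del * del / (INR d * 8 * eta + 1) := Rlt_le_trans _ _ _ HeN (Rmin_l _ _).
  have [aN [HaN HN2]] := Hys N.
  have Hdist : norm (vsub (ys N) p) < del.
    apply: sq_lt_nonneg; first lra.
    rewrite norm2_sq; apply: Rle_lt_trans (Hrate N) _.
    have Hd0 := pos_INR d.
    have HekN := Hek N.
    have : ek N * (INR d * 8 * eta + 1) < del * del.
      have HX : 0 < INR d * 8 * eta + 1 by nra.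
      have := Rmult_lt_compat_r _ _ _ HX HeN2.
      have -> : del * del / (INR d * 8 * eta + 1) * (INR d * 8 * eta + 1) = del * del by field; lra.
      done.
    nra.
  have Hd1 : norm (vsub (ys N) p) < del1 := Rlt_le_trans _ _ _ Hdist (Rmin_l _ _).
  have Hd2 : norm (vsub (ys N) p) < del2 := Rlt_le_trans _ _ _ Hdist (Rmin_r _ _).
  have := Hn1 _ Hd1; rewrite HaN /= => HaNlow.
  have Hq : qf w p - g <= qf w (ys N).
    rewrite /qf.
    have Esp : vsub (ys N) w = vadd (vsub (ys N) p) (vsub p w).
      by apply: functional_extensionality => k; rewrite /vsub /vadd; ring.
    rewrite Esp norm2_add.
    have Hcs := cauchy_schwarz (vscale (-1) (vsub (ys N) p)) (vsub p w).
    rewrite innerZl norm_scale Rabs_Ropp Rabs_R1 Rmult_1_l in Hcs.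
    have Hr0 := norm_ge0 (vsub (ys N) p).
    have Hn2 := norm2_ge0 (vsub (ys N) p).
    have Hkey : norm (vsub (ys N) p) * norm (vsub p w) <= g * eta.
      have : norm (vsub (ys N) p) * (norm (vsub p w) + 1) < g * eta.
        have := Rmult_lt_compat_r (norm (vsub p w) + 1) _ _ ltac:(lra) Hd2.
        by rewrite /del2 /Rdiv Rmult_assoc Rinv_l; lra.
      nra.
    have -> : (norm2 (vsub (ys N) p) + 2 * inner (vsub (ys N) p) (vsub p w) + norm2 (vsub p w)) / (2 * eta)
      = norm2 (vsub p w) / (2 * eta) + (norm2 (vsub (ys N) p) / (2 * eta) + inner (vsub (ys N) p) (vsub p w) / eta) by field; lra.
    have : - (g * eta) / eta <= inner (vsub (ys N) p) (vsub p w) / eta.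
      apply: Rmult_le_compat_r; [apply: Rlt_le; apply: Rinv_0_lt_compat; lra | lra].
    have -> : - (g * eta) / eta = - g by field; lra.
    have : 0 <= norm2 (vsub (ys N) p) / (2 * eta).
      apply: Rmult_le_pos => //; apply: Rlt_le; apply: Rinv_0_lt_compat; lra.
    lra.
  lra.
have [ap [Hap Hapm]] := Hpm.
exists p => y; rewrite Hap /=.
case Ehy : (h y) => [ay|] //=.
have := Hm1 y ay Ehy; rewrite /qf in Hapm *; lra.
Qed.
End ProxExist.

Lemma rsum_scal_r (I : finType) (P : pred I) c (F : I -> R) :
  \big[Rplus/0]_(i | P i) F i * c = \big[Rplus/0]_(i | P i) (F i * c).
Proof. rewrite Rmult_comm rsum_scal; apply: eq_bigr => i _; ring. Qed.

Lemma step_identity d (x xp xb u g : vec d) eta : eta <> 0 ->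
  inner (vsub xp (vsub x (vscale eta u))) (vsub xb xp) * / eta
  + inner (vsub xb (vsub x (vscale eta g))) (vsub x xb) * / eta
  + inner g (vsub xp x) - inner (vsub g u) (vsub xp xb)
  + / eta / 2 * norm2 (vsub xp xb) + / eta / 2 * norm2 (vsub xp x)
  + eta / 2 * norm2 (vscale (1 / eta) (vsub x xb)) = 0.
Proof.
move=> He; rewrite /norm2 /inner !rsum_scal !rsum_scal_r /Rminus -rsum_opp.
rewrite -!big_split /=.
apply: big1 => k _; rewrite /vsub /vscale /=; field; exact: He.
Qed.

Definition hval d (h : vec d -> option R) (x : vec d) : R :=
  match h x with Some a => a | None => 0 end.

Lemma inner_vsum_l d m (F : 'I_m -> vec d) (u : vec d) :
  inner (vsum F) u = \big[Rplus/0]_(i < m) inner (F i) u.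
Proof.
rewrite /inner /vsum.
rewrite (eq_bigr (fun k => \big[Rplus/0]_(i < m) (F i k * u k))); last first.
  by move=> k _; rewrite rsum_scal_r.
by rewrite exchange_big.
Qed.

Section ProxFacts.
Variable d : nat.
Variable eta : R.
Variable h : vec d -> option R.
Hypothesis Heta : 0 < eta.
Hypothesis Hprop : proper_fn h.
Hypothesis Hconv : convex_fn h.
Hypothesis Hlsc : lsc_fn h.

Lemma prox_spec w : is_prox eta h w (prox eta h w).
Proof. rewrite /prox; apply: epsilon_spec; exact: prox_exists. Qed.

Lemma prox_fin w : h (prox eta h w) = Some (hval h (prox eta h w)).
Proof.
have H := prox_spec w.
have [y0 Hy0] := Hprop.
move: (H y0); rewrite /hval.
case: (h (prox eta h w)) => // .
by case: (h y0) Hy0.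
Qed.

Lemma three_point w p z hp hz : is_prox eta h w p -> h p = Some hp -> h z = Some hz ->
  hp - hz <= inner (vsub p w) (vsub z p) * / eta.
Proof.
move=> Hp Ep Ez.
apply: (@small_s _ _ (norm2 (vsub z p) * / (2 * eta))).
  apply: Rmult_le_pos; [exact: norm2_ge0|]; apply: Rlt_le; apply: Rinv_0_lt_compat; lra.
move=> s Hs.
have Hs1 : 0 <= s <= 1 by lra.
have [c [Hc Hcle]] := Hconv Ez Ep Hs1.
have := Hp (vadd (vscale s z) (vscale (1 - s) p)); rewrite Ep Hc /=.
have Ev : vsub (vadd (vscale s z) (vscale (1 - s) p)) w = vadd (vsub p w) (vscale s (vsub z p)).
  by apply: functional_extensionality => k; rewrite /vsub /vadd /vscale; ring.
rewrite Ev norm2_add innerZr norm2_scale => H.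
set A := inner (vsub p w) (vsub z p) in H *.
set Nz := norm2 (vsub z p) in H *.
set Np := norm2 (vsub p w) in H *.
have Hie : / (2 * eta) = / eta / 2 by field; lra.
rewrite Hie.
have Hi : 0 < / eta by apply: Rinv_0_lt_compat.
have H2 : s * (hp - hz) <= s * (A * / eta + s * (Nz * (/ eta / 2))).
  have : hp + Np / (2 * eta) <= s * hz + (1 - s) * hp + (Np + 2 * (s * A) + s * s * Nz) / (2 * eta) by lra.
  rewrite /Rdiv Hie; nra.
have := Rmult_le_reg_l s _ _ ltac:(lra) H2.
lra.
Qed.
End ProxFacts.

Section Step.
Variables (n d : nat) (L : R).
Variables (f : 'I_n -> vec d -> R) (gf : 'I_n -> vec d -> vec d) (h : vec d -> option R).
Hypothesis Hn : (1 <= n)%N.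
Hypothesis HL : 0 < L.
Hypothesis Hgrad : forall i, has_gradient (f i) (gf i).
Hypothesis Hsm : forall i, L_smooth L (gf i).
Hypothesis Hprop : proper_fn h.
Hypothesis Hconv : convex_fn h.
Hypothesis Hlsc : lsc_fn h.

Definition eta0 := 1 / (5 * L).
Lemma eta0_pos : 0 < eta0.
Proof. rewrite /eta0; apply: Rdiv_lt_0_compat; lra. Qed.
Lemma eta0_inv : / eta0 = 5 * L.
Proof. rewrite /eta0; field; lra. Qed.

Lemma INRn_pos : 0 < INR n.
Proof. apply: lt_0_INR; apply/ltP; exact: Hn. Qed.

Lemma favg_descent x y :
  favg f y <= favg f x + inner (gradavg gf x) (vsub y x) + L / 2 * norm2 (vsub y x).
Proof.
rewrite /favg /gradavg innerZl inner_vsum_l.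
have H : \big[Rplus/0]_(i < n) f i y <=
   \big[Rplus/0]_(i < n) (f i x + inner (gf i x) (vsub y x) + L / 2 * norm2 (vsub y x)).
  apply: rsum_le => i _; apply: descent; [exact: Hgrad|exact: Hsm|lra].
rewrite !rsum_split rsum_const card_ord in H.
have Hn0 := INRn_pos.
have -> : 1 / INR n * \big[Rplus/0]_(i < n) f i x + 1 / INR n * \big[Rplus/0]_(i < n) inner (gf i x) (vsub y x) + L / 2 * norm2 (vsub y x)
  = 1 / INR n * (\big[Rplus/0]_(i < n) f i x + \big[Rplus/0]_(i < n) inner (gf i x) (vsub y x) + INR n * (L / 2 * norm2 (vsub y x))) by field; lra.
apply: Rmult_le_compat_l => //.
apply: Rlt_le; apply: Rdiv_lt_0_compat; lra.
Qed.

Lemma step_descent x v ax : h x = Some ax ->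
  favg f (prox eta0 h (vsub x (vscale eta0 v))) + hval h (prox eta0 h (vsub x (vscale eta0 v)))
  <= favg f x + ax + eta0 / 2 * norm2 (vsub v (gradavg gf x))
     - 2 * L * norm2 (vsub (prox eta0 h (vsub x (vscale eta0 v))) x)
     - eta0 / 2 * norm2 (grad_map eta0 (gradavg gf) h x).
Proof.
move=> Hx.
have He := eta0_pos.
set g := gradavg gf x.
set xp := prox eta0 h (vsub x (vscale eta0 v)).
set xb := prox eta0 h (vsub x (vscale eta0 g)).
have Hxp := prox_fin He Hprop Hconv Hlsc (vsub x (vscale eta0 v)).
have Hxb := prox_fin He Hprop Hconv Hlsc (vsub x (vscale eta0 g)).
rewrite -/xp in Hxp; rewrite -/xb in Hxb.
have P1 := three_point He Hconv (prox_spec He Hprop Hconv Hlsc (vsub x (vscale eta0 v))) Hxp Hxb.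
have P2 := three_point He Hconv (prox_spec He Hprop Hconv Hlsc (vsub x (vscale eta0 g))) Hxb Hx.
rewrite -/xp in P1; rewrite -/xb in P2.
have S := favg_descent x xp.
have Y := @young _ (vsub g v) (vsub xp xb) eta0 He.
have ID := step_identity x xp xb v g (Rgt_not_eq _ _ He).
rewrite eta0_inv in P1 P2 ID.
have E2 : / (2 * eta0) = 5 * L / 2 by rewrite /eta0; field; lra.
rewrite E2 in Y.
have -> : norm2 (vsub v g) = norm2 (vsub g v) by rewrite !norm2_sub innerC; ring.
rewrite /grad_map -/g -/xb.
rewrite -/g in S.
lra.
Qed.
End Step.

Definition upd (A B : finType) (F : {ffun A -> B}) (a : A) (y : B) : {ffun A -> B} :=
  [ffun i => if i == a then y else F i].

Lemma upd_at (A B : finType) (F : {ffun A -> B}) a y : upd F a y a = y.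
Proof. by rewrite /upd ffunE eqxx. Qed.
Lemma upd_other (A B : finType) (F : {ffun A -> B}) a y i : i != a -> upd F a y i = F i.
Proof. by move=> H; rewrite /upd ffunE (negbTE H). Qed.
Lemma upd_upd_same (A B : finType) (F : {ffun A -> B}) a y :
  upd (upd F a y) a (F a) = F.
Proof.
apply/ffunP => i; rewrite /upd !ffunE; case: eqP => [->|] //.
Qed.

Lemma resample (A B : finType) (a : A) (Phi : {ffun A -> B} -> R) :
  INR #|B| * \big[Rplus/0]_(F : {ffun A -> B}) Phi F
  = \big[Rplus/0]_(F : {ffun A -> B}) \big[Rplus/0]_(y : B) Phi (upd F a y).
Proof.
rewrite (pair_bigA _ (fun F y => Phi (upd F a y))).
pose sg := fun p : {ffun A -> B} * B => (upd p.1 a p.2, p.1 a).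
have Hinv : cancel sg sg.
  case=> F y; rewrite /sg /=; congr pair; first exact: upd_upd_same.
  exact: upd_at.
have -> : \big[Rplus/0]_(p : {ffun A -> B} * B) Phi (upd p.1 a p.2) = \big[Rplus/0]_(p : {ffun A -> B} * B) Phi p.1.
  rewrite (reindex_inj (can_inj Hinv)); apply: eq_bigr => p _.
  by rewrite /sg /= upd_upd_same.
rewrite -(pair_bigA _ (fun F y => Phi F)) rsum_scal.
by apply: eq_bigr => F _; rewrite rsum_const.
Qed.

Lemma inner_vsum_r d m (F : 'I_m -> vec d) (u : vec d) :
  inner u (vsum F) = \big[Rplus/0]_(i < m) inner u (F i).
Proof. rewrite innerC inner_vsum_l; apply: eq_bigr => i _; exact: innerC. Qed.

Lemma inner_zero_l d (w : vec d) : inner (fun _ => 0) w = 0.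
Proof. rewrite /inner; apply: big1 => k _; ring. Qed.



Section Variance.
Variables (n b d : nat).
Hypothesis Hn : (1 <= n)%N.
Variable z : 'I_n -> vec d.
Hypothesis Hz : vsum z = (fun _ => 0).

Lemma INRn_pos' : 0 < INR n.
Proof. apply: lt_0_INR; apply/ltP; exact: Hn. Qed.

Lemma cross_zero (j j' : 'I_b) : j != j' ->
  \big[Rplus/0]_(I : {ffun 'I_b -> 'I_n}) inner (z (I j)) (z (I j')) = 0.
Proof.
move=> Hjj.
have H := resample j (fun I : {ffun 'I_b -> 'I_n} => inner (z (I j)) (z (I j'))).
have E0 : \big[Rplus/0]_(F : {ffun 'I_b -> 'I_n}) \big[Rplus/0]_(y : 'I_n)
    inner (z (upd F j y j)) (z (upd F j y j')) = 0.
  apply: big1 => F _.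
  rewrite (eq_bigr (fun y => inner (z y) (z (F j')))); last first.
    move=> y _; rewrite upd_at upd_other //; by rewrite eq_sym.
  by rewrite -inner_vsum_l Hz inner_zero_l.
rewrite E0 card_ord in H.
apply: (Rmult_eq_reg_l (INR n)); first by rewrite Rmult_0_r.
have := INRn_pos'; lra.
Qed.

Lemma diag_sum (j : 'I_b) :
  INR n * \big[Rplus/0]_(I : {ffun 'I_b -> 'I_n}) norm2 (z (I j))
  = INR #|{ffun 'I_b -> 'I_n}| * \big[Rplus/0]_(y : 'I_n) norm2 (z y).
Proof.
have H := resample j (fun I : {ffun 'I_b -> 'I_n} => norm2 (z (I j))).
rewrite card_ord in H; rewrite H.
rewrite (eq_bigr (fun F => \big[Rplus/0]_(y : 'I_n) norm2 (z y))); last first.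
  by move=> F _; apply: eq_bigr => y _; rewrite upd_at.
by rewrite rsum_const.
Qed.

Lemma var_sum :
  INR n * \big[Rplus/0]_(I : {ffun 'I_b -> 'I_n}) norm2 (vsum (fun j => z (I j)))
  = INR b * INR #|{ffun 'I_b -> 'I_n}| * \big[Rplus/0]_(y : 'I_n) norm2 (z y).
Proof.
rewrite /norm2.
rewrite (eq_bigr (fun I : {ffun 'I_b -> 'I_n} => \big[Rplus/0]_(j < b) \big[Rplus/0]_(j' < b) inner (z (I j)) (z (I j')))); last first.
  move=> I _; rewrite inner_vsum_l; apply: eq_bigr => j _; exact: inner_vsum_r.
rewrite exchange_big rsum_scal.
rewrite (eq_bigr (fun j : 'I_b => INR n * \big[Rplus/0]_(I : {ffun 'I_b -> 'I_n}) norm2 (z (I j)))); last first.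
  move=> j _; congr Rmult.
  rewrite exchange_big (bigD1 j) //=.
  rewrite [X in _ + X = _]big1; first by rewrite Rplus_0_r.
  move=> j' Hj'; apply: cross_zero; by rewrite eq_sym.
rewrite (eq_bigr (fun j : 'I_b => INR #|{ffun 'I_b -> 'I_n}| * \big[Rplus/0]_(y : 'I_n) norm2 (z y))); last first.
  by move=> j _; rewrite diag_sum.
by rewrite rsum_const card_ord Rmult_assoc.
Qed.
End Variance.

Lemma iter_Rplus k c : iter k (Rplus c) 0 = INR k * c.
Proof. elim: k => [|k IH]; first (simpl; ring). rewrite iterS IH S_INR; ring. Qed.

Lemma rsum_const_pred (I : finType) (Q : pred I) (c : R) :
  \big[Rplus/0]_(i | Q i) c = INR #|[pred i | Q i]| * c.
Proof.
rewrite -iter_Rplus -(big_const 0 Rplus [pred i | Q i] c).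
by apply: eq_bigl => i; rewrite inE.
Qed.

Lemma rsum_if (I : finType) (P : pred I) (A B : R) :
  \big[Rplus/0]_(i : I) (if P i then A else B)
  = INR #|I| * A + INR #|[pred i | ~~ P i]| * (B - A).
Proof.
rewrite -rsum_const -rsum_const_pred.
have -> : \big[Rplus/0]_(i | ~~ P i) (B - A) = \big[Rplus/0]_(i : I) (if ~~ P i then B - A else 0).
  by rewrite big_mkcond.
rewrite -big_split /=.
apply: eq_bigr => i _; case: (P i) => /=; ring.
Qed.

Lemma count_notin (n b : nat) (i : 'I_n) :
  #|[pred J : {ffun 'I_b -> 'I_n} | ~~ [exists j, J j == i]]| = ((n - 1)^b)%N.
Proof.
have -> : ((n - 1)^b)%N = #|ffun_on_mem 'I_b (mem (predC1 i))|.
  by rewrite card_ffun_on cardC1 !card_ord subn1.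
apply: eq_card => J; rewrite !inE negb_exists.
apply/forallP/ffun_onP => H j; have := H j; by rewrite !inE.
Qed.

Lemma J_part (n b d : nat) (Hn : (1 <= n)%N) (y x : vec d) (al : 'I_n -> vec d) be : 0 < be ->
  \big[Rplus/0]_(J : {ffun 'I_b -> 'I_n})
     (1 / INR n * \big[Rplus/0]_(i < n) norm2 (vsub y (if [exists j, J j == i] then x else al i)))
  <= INR #|{ffun 'I_b -> 'I_n}| * norm2 (vsub y x)
     + INR ((n - 1)^b)%N * (/ be * norm2 (vsub y x))
     + INR ((n - 1)^b)%N * (1 + be) * (1 / INR n * \big[Rplus/0]_(i < n) norm2 (vsub x (al i))).
Proof.
move=> Hbe.
have Hn0 : 0 < INR n by apply: lt_0_INR; apply/ltP.
rewrite -rsum_scal exchange_big /=.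
set A := norm2 (vsub y x).
set Qc := INR ((n - 1)^b)%N.
have HQ : 0 <= Qc by apply: pos_INR.
have Hi : forall i : 'I_n,
  \big[Rplus/0]_(J : {ffun 'I_b -> 'I_n}) (norm2 (vsub y (if [exists j, J j == i] then x else al i)))
  <= (INR #|{ffun 'I_b -> 'I_n}| * A + Qc * (/ be * A) + Qc * (1 + be) * norm2 (vsub x (al i))).
  move=> i.
  rewrite (eq_bigr (fun J : {ffun 'I_b -> 'I_n} => if [exists j, J j == i] then A else norm2 (vsub y (al i)))); last first.
    by move=> J _; case: ifP.
  rewrite rsum_if count_notin -/Qc.
  have Esp : vsub y (al i) = vadd (vsub y x) (vsub x (al i)).
    by apply: functional_extensionality => k; rewrite /vsub /vadd; ring.
  rewrite Esp norm2_add -/A.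
  have Y := @young _ (vsub x (al i)) (vsub y x) be Hbe.
  rewrite (innerC (vsub y x)) -/A in Y *.
  have Hib : / (2 * be) = / be / 2 by field; lra.
  rewrite Hib in Y.
  have HC := norm2_ge0 (vsub x (al i)).
  have HA := norm2_ge0 (vsub y x).
  set Ci := norm2 (vsub x (al i)) in Y HC *.
  set Ii := inner (vsub x (al i)) (vsub y x) in Y *.
  have : A + 2 * Ii + Ci - A <= / be * A + be * Ci + Ci by lra.
  move=> H; have := Rmult_le_compat_l Qc _ _ HQ H.
  match goal with |- _ -> ?a * A + _ <= ?b * A + _ + _ => have -> : a = b by [] end.
  lra.
apply: Rle_trans (Rmult_le_compat_l _ _ _ _ (rsum_le (P := xpredT) (fun i _ => Hi i))) _.
  by apply: Rlt_le; apply: Rdiv_lt_0_compat; lra.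
rewrite !rsum_split !rsum_const card_ord -rsum_scal.
have -> : 1 / INR n * (INR n * (INR #|{ffun 'I_b -> 'I_n}| * A) + INR n * (Qc * (/ be * A)) + Qc * (1 + be) * \big[Rplus/0]_(i < n) norm2 (vsub x (al i)))
  = INR #|{ffun 'I_b -> 'I_n}| * A + Qc * (/ be * A) + Qc * (1 + be) * (1 / INR n * \big[Rplus/0]_(i < n) norm2 (vsub x (al i))) by field; lra.
exact: Rle_refl.
Qed.

Lemma vsum_apply d m (F : 'I_m -> vec d) k : vsum F k = \big[Rplus/0]_(i < m) F i k.
Proof. by []. Qed.

Lemma center_le d n (Hn : (1 <= n)%N) (a : 'I_n -> vec d) :
  \big[Rplus/0]_(y < n) norm2 (vsub (a y) (vscale (1 / INR n) (vsum a)))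
  <= \big[Rplus/0]_(y < n) norm2 (a y).
Proof.
have Hn0 : 0 < INR n by apply: lt_0_INR; apply/ltP.
set m := vscale (1 / INR n) (vsum a).
have Hs : vsum a = vscale (INR n) m.
  apply: functional_extensionality => k; rewrite /m /vscale; field; lra.
rewrite (eq_bigr (fun y => norm2 (a y) + (- (2 * inner (a y) m)) + norm2 m)); last first.
  by move=> y _; rewrite norm2_sub; ring.
rewrite !rsum_split rsum_opp -rsum_scal -inner_vsum_l Hs innerZl rsum_const card_ord.
match goal with |- ?S + _ + _ <= ?S' => have -> : S' = S by [] end.
have := norm2_ge0 m; have := pos_INR n; rewrite /norm2; nra.
Qed.

Section IPart.
Variables (n b d : nat) (L : R).
Variable gf : 'I_n -> vec d -> vec d.
Hypothesis Hn : (1 <= n)%N.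
Hypothesis Hb : (1 <= b)%N.
Hypothesis HL : 0 < L.
Hypothesis Hsm : forall i, L_smooth L (gf i).

Lemma I_part (x : vec d) (al : 'I_n -> vec d) :
  \big[Rplus/0]_(I : {ffun 'I_b -> 'I_n})
    norm2 (vsub (vadd (vscale (1 / INR b)
                  (vsum (fun j : 'I_b => vsub (gf (I j) x) (gf (I j) (al (I j))))))
                  (vscale (1 / INR n) (vsum (fun i => gf i (al i)))))
                (gradavg gf x))
  <= INR #|{ffun 'I_b -> 'I_n}| * (L * L / INR b)
       * (1 / INR n * \big[Rplus/0]_(i < n) norm2 (vsub x (al i))).
Proof.
have Hn0 : 0 < INR n by apply: lt_0_INR; apply/ltP.
have Hb0 : 0 < INR b by apply: lt_0_INR; apply/ltP.
pose a := fun i => vsub (gf i x) (gf i (al i)).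
pose m := vscale (1 / INR n) (vsum a).
pose z := fun i => vsub (a i) m.
have Hz : vsum z = (fun _ => 0).
  apply: functional_extensionality => k.
  rewrite vsum_apply /z /vsub /Rminus rsum_split rsum_opp rsum_const card_ord /m /vscale vsum_apply.
  set s1 := \big[Rplus/0]_(i < n) a i k.
  field; lra.
have Hv : forall I : {ffun 'I_b -> 'I_n},
   vsub (vadd (vscale (1 / INR b) (vsum (fun j : 'I_b => vsub (gf (I j) x) (gf (I j) (al (I j))))))
              (vscale (1 / INR n) (vsum (fun i => gf i (al i))))) (gradavg gf x)
   = vscale (1 / INR b) (vsum (fun j => z (I j))).
  move=> I; apply: functional_extensionality => k.
  have E1 : \big[Rplus/0]_(j < b) z (I j) k = \big[Rplus/0]_(j < b) a (I j) k - INR b * m k.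
    by rewrite /z /vsub /Rminus rsum_split rsum_opp rsum_const card_ord.
  have E2 : m k = 1 / INR n * (\big[Rplus/0]_(i < n) gf i x k - \big[Rplus/0]_(i < n) gf i (al i) k).
    by rewrite /m /vscale vsum_apply /a /vsub /Rminus rsum_split rsum_opp.
  rewrite /gradavg /vsub /vadd /vscale !vsum_apply.
  change (1 / INR b * \big[Rplus/0]_(j < b) a (I j) k + 1 / INR n * \big[Rplus/0]_(i < n) gf i (al i) k -
    1 / INR n * \big[Rplus/0]_(i < n) gf i x k = 1 / INR b * \big[Rplus/0]_(j < b) z (I j) k).
  rewrite E1 E2.
  set s1 := \big[Rplus/0]_(j < b) a (I j) k.
  set s2 := \big[Rplus/0]_(i < n) gf i (al i) k.
  set s3 := \big[Rplus/0]_(i < n) gf i x k.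
  field; lra.
rewrite (eq_bigr (fun I : {ffun 'I_b -> 'I_n} => 1 / INR b * (1 / INR b) * norm2 (vsum (fun j => z (I j))))); last first.
  by move=> I _; rewrite Hv norm2_scale.
rewrite -rsum_scal.
have VS := @var_sum n b d Hn z Hz.
have HC : \big[Rplus/0]_(y < n) norm2 (z y) <= L * L * \big[Rplus/0]_(i < n) norm2 (vsub x (al i)).
  apply: Rle_trans (center_le Hn a) _.
  rewrite rsum_scal; apply: rsum_le => i _.
  have H := Hsm i x (al i).
  rewrite -!norm2_sq.
  have := norm_ge0 (vsub (gf i x) (gf i (al i))).
  have := norm_ge0 (vsub x (al i)).
  rewrite /a; nra.
set NI := INR #|{ffun 'I_b -> 'I_n}|.
have HNI : 0 <= NI by apply: pos_INR.
set SS := \big[Rplus/0]_(I : {ffun 'I_b -> 'I_n}) norm2 (vsum (fun j => z (I j))) in VS *.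
set Z := \big[Rplus/0]_(y < n) norm2 (z y) in VS HC.
have ESS : SS = INR b * NI * Z / INR n by rewrite -VS /NI; field; lra.
rewrite ESS.
have -> : 1 / INR b * (1 / INR b) * (INR b * NI * Z / INR n) = NI / (INR b * INR n) * Z by field; lra.
have -> : NI * (L * L / INR b) * (1 / INR n * \big[Rplus/0]_(i < n) norm2 (vsub x (al i)))
  = NI / (INR b * INR n) * (L * L * \big[Rplus/0]_(i < n) norm2 (vsub x (al i))) by field; lra.
apply: Rmult_le_compat_l => //.
apply: Rmult_le_pos => //; apply: Rlt_le; apply: Rinv_0_lt_compat; nra.
Qed.
End IPart.

Lemma consts_i N B NJ Qc L : 1 <= B -> 1 <= N -> 0 < NJ -> 0 <= Qc -> Qc <= NJ -> 0 < L ->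
  2 * L * B / (B + 4 * N) * (NJ + Qc * / (B / (4 * N))) <= 2 * L * NJ.
Proof.
move=> HB HN HNJ HQ HQN HL.
have -> : 2 * L * B / (B + 4 * N) * (NJ + Qc * / (B / (4 * N)))
  = 2 * L * (B * NJ + 4 * N * Qc) / (B + 4 * N) by field; lra.
apply: (Rmult_le_reg_r (B + 4 * N)); first lra.
rewrite /Rdiv Rmult_assoc Rinv_l; last lra.
have : 0 <= (L * N) * (NJ - Qc) by apply: Rmult_le_pos; nra.
nra.
Qed.

Lemma consts_ii N B NJ Qc L : 1 <= B -> B <= N -> B * B * B = N * N -> 0 < NJ -> 0 <= Qc ->
  Qc * (N + B) <= NJ * N -> 0 < L ->
  NJ * (1 / (5 * L) / 2) * (L * L / B) + 2 * L * B / (B + 4 * N) * Qc * (1 + B / (4 * N))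
  <= 2 * L * B / (B + 4 * N) * NJ.
Proof.
move=> HB HBN H3 HNJ HQ HQN HL.
have HN : 1 <= N by lra.
set P := 80 * N * B * B * NJ - 20 * B * B * Qc * (4 * N + B) - (4 * N * B + 16 * N * N) * NJ.
have HP : 0 <= P.
  have Hid : (N + B) * P = 20 * B * B * (4 * N + B) * (N * NJ - Qc * (N + B))
                           + N * NJ * (44 * N * N - 20 * N * B - 4 * B * B) + 60 * N * NJ * (B * B * B - N * N).
    rewrite /P; ring.
  rewrite H3 Rminus_diag Rmult_0_r Rplus_0_r in Hid.
  have H1 : 0 <= 20 * B * B * (4 * N + B) * (N * NJ - Qc * (N + B)).
    apply: Rmult_le_pos; [|lra]; apply: Rmult_le_pos; [|lra]; nra.
  have H2 : 0 <= N * NJ * (44 * N * N - 20 * N * B - 4 * B * B).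
    apply: Rmult_le_pos; [nra|nra].
  have : 0 <= (N + B) * P by lra.
  move=> H; case: (Rle_lt_dec 0 P) => // Hneg; nra.
have E : 2 * L * B / (B + 4 * N) * NJ
   - (NJ * (1 / (5 * L) / 2) * (L * L / B) + 2 * L * B / (B + 4 * N) * Qc * (1 + B / (4 * N)))
   = L * P / (40 * N * B * (B + 4 * N)).
  rewrite /P; field; lra.
have : 0 <= L * P / (40 * N * B * (B + 4 * N)).
  apply: Rmult_le_pos; first nra.
  apply: Rlt_le; apply: Rinv_0_lt_compat; nra.
lra.
Qed.

Lemma nat_count_bound (n b : nat) : (1 <= n)%N -> ((n-1)^b * (n + b) <= n * n ^ b)%N.
Proof.
move=> Hn; rewrite -expnS; elim: b => [|b IH]; first by rewrite expn0 expn1; lia.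
rewrite !expnS in IH *.
have H1 : ((n-1) * (n + b.+1) <= n * (n + b))%N by nia.
move: IH H1; set X := ((n-1)^b)%N; set Y := (n^b)%N => IH H1.
have A := leq_mul (leqnn X) H1.
have B := leq_mul (leqnn n) IH.
nia.
Qed.

Definition Sfun d n (s : state d n) : R := 1 / INR n * \big[Rplus/0]_(i < n) norm2 (vsub s.1 (s.2 i)).

Lemma Sfun_ge0 d n (s : state d n) : (1 <= n)%N -> 0 <= Sfun s.
Proof.
move=> Hn; rewrite /Sfun; apply: Rmult_le_pos.
  apply: Rlt_le; apply: Rdiv_lt_0_compat; [lra|apply: lt_0_INR; apply/ltP; exact: Hn].
by apply: rsum_ge0 => i _; exact: norm2_ge0.
Qed.

Lemma INR_muln a c : INR (a * c)%N = INR a * INR c.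
Proof. by rewrite -mult_INR. Qed.

Section Core.
Variables (n d b : nat) (L : R).
Variables (f : 'I_n -> vec d -> R) (gf : 'I_n -> vec d -> vec d) (h : vec d -> option R).
Hypothesis Hn : (1 <= n)%N.
Hypothesis Hb1 : (1 <= b)%N.
Hypothesis HBN : (b <= n)%N.
Hypothesis H3 : INR b * INR b * INR b = INR n * INR n.
Hypothesis HL : 0 < L.
Hypothesis Hgrad : forall i, has_gradient (f i) (gf i).
Hypothesis Hsm : forall i, L_smooth L (gf i).
Hypothesis Hprop : proper_fn h.
Hypothesis Hconv : convex_fn h.
Hypothesis Hlsc : lsc_fn h.

Definition cc := 2 * L * INR b / (INR b + 4 * INR n).
Definition be := INR b / (4 * INR n).
Definition Psi (s : state d n) : R := favg f s.1 + hval h s.1 + cc * Sfun s.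

Lemma core (x : vec d) (al : 'I_n -> vec d) ax : h x = Some ax ->
  \big[Rplus/0]_(D : draw n b) Psi (saga_step (eta0 L) gf h (x, al) D)
  <= INR #|{: draw n b}| * (favg f x + ax + cc * Sfun (x, al)
                              - (eta0 L) / 2 * norm2 (grad_map (eta0 L) (gradavg gf) h x)).
Proof.
move=> Hx.
have Hn0 : 0 < INR n by apply: lt_0_INR; apply/ltP.
have Hb0 : 1 <= INR b by apply: (le_INR 1); apply/leP.
have HbnR : INR b <= INR n by apply: le_INR; apply/leP.
have Hbe : 0 < be by rewrite /be; apply: Rdiv_lt_0_compat; lra.
have Hcc : 0 < cc by rewrite /cc; apply: Rdiv_lt_0_compat; nra.
have He := eta0_pos HL.
pose v := fun I : {ffun 'I_b -> 'I_n} =>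
  vadd (vscale (1 / INR b) (vsum (fun j : 'I_b => vsub (gf (I j) x) (gf (I j) (al (I j))))))
       (vscale (1 / INR n) (vsum (fun i => gf i (al i)))).
pose xp := fun I => prox (eta0 L) h (vsub x (vscale (eta0 L) (v I))).
pose SJ := fun I (J : {ffun 'I_b -> 'I_n}) =>
  1 / INR n * \big[Rplus/0]_(i < n) norm2 (vsub (xp I) (if [exists j, J j == i] then x else al i)).
rewrite (eq_bigr (fun D : draw n b => favg f (xp D.1) + hval h (xp D.1) + cc * SJ D.1 D.2)); last first.
  by case=> I J _.
rewrite -(pair_bigA _ (fun I J => favg f (xp I) + hval h (xp I) + cc * SJ I J)) /=.
set NJ := INR #|{ffun 'I_b -> 'I_n}|.
set Qc := INR ((n - 1)^b)%N.
set G := norm2 (grad_map (eta0 L) (gradavg gf) h x).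
set S := Sfun (x, al).
have HNJ : NJ = INR (n ^ b)%N by rewrite /NJ card_ffun !card_ord.
have HNJ0 : 0 < NJ by rewrite HNJ; apply: lt_0_INR; apply/ltP; rewrite expn_gt0 Hn.
have HQ0 : 0 <= Qc by apply: pos_INR.
have HQN : Qc * (INR n + INR b) <= NJ * INR n.
  rewrite HNJ /Qc -plus_INR -!mult_INR; apply: le_INR; apply/leP.
  have := nat_count_bound b Hn; rewrite -!multE -!plusE; lia.
have HQle : Qc <= NJ.
  have : Qc * INR n <= NJ * INR n by nra.
  move=> H; apply: (Rmult_le_reg_r (INR n)) => //.
have HS0 : 0 <= S by apply: Sfun_ge0.
have HI : forall I : {ffun 'I_b -> 'I_n},
  \big[Rplus/0]_(J : {ffun 'I_b -> 'I_n}) (favg f (xp I) + hval h (xp I) + cc * SJ I J)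
  <= NJ * (favg f x + ax - (eta0 L) / 2 * G) + NJ * ((eta0 L) / 2) * norm2 (vsub (v I) (gradavg gf x))
     + cc * Qc * (1 + be) * S.
  move=> I.
  rewrite rsum_split rsum_const -rsum_scal -/NJ.
  have HJ := J_part b Hn (xp I) x al Hbe.
  rewrite -/Qc -/NJ in HJ.
  have HD := step_descent Hn HL Hgrad Hsm Hprop Hconv Hlsc (v I) Hx.
  rewrite -/(xp I) -/G in HD.
  have HA := norm2_ge0 (vsub (xp I) x).
  have Hc1 := consts_i Hb0 (Rle_trans _ _ _ Hb0 HbnR) HNJ0 HQ0 HQle HL.
  rewrite -/cc -/be in Hc1.
  set A := norm2 (vsub (xp I) x) in HJ HD HA *.
  set V := norm2 (vsub (v I) (gradavg gf x)) in HD *.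
  set Fp := favg f (xp I) + hval h (xp I) in HD *.
  set SS := \big[Rplus/0]_(J : {ffun 'I_b -> 'I_n}) SJ I J.
  have HSJ : SS <= NJ * A + Qc * (/ be * A) + Qc * (1 + be) * S.
    exact: HJ.
  have : cc * SS <= cc * (NJ * A + Qc * (/ be * A) + Qc * (1 + be) * S).
    by apply: Rmult_le_compat_l; lra.
  have : NJ * Fp <= NJ * (favg f x + ax + (eta0 L) / 2 * V - 2 * L * A - (eta0 L) / 2 * G).
    by apply: Rmult_le_compat_l; lra.
  have : cc * (NJ + Qc * / be) * A <= 2 * L * NJ * A by apply: Rmult_le_compat_r.
  move=> H1 H2 H3'.

  lra.
apply: Rle_trans (rsum_le (P := xpredT) (fun I _ => HI I)) _.
rewrite !rsum_split !rsum_const -rsum_scal.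
have HIp := @I_part n b d L gf Hn Hb1 Hsm x al.
rewrite -/v in HIp.
have HV : \big[Rplus/0]_(I : {ffun 'I_b -> 'I_n}) norm2 (vsub (v I) (gradavg gf x)) <= NJ * (L * L / INR b) * S := HIp.
have Hcard : INR #|{: draw n b}| = NJ * NJ by rewrite card_prod INR_muln.
have Hep : 0 <= NJ * (eta0 L / 2) by apply: Rmult_le_pos; lra.
apply: (Rle_trans _ (NJ * (NJ * (favg f x + ax - eta0 L / 2 * G)) + NJ * (eta0 L / 2) * (NJ * (L * L / INR b) * S) + NJ * (cc * Qc * (1 + be) * S))).
  apply: Rplus_le_compat; last exact: Rle_refl.
  apply: Rplus_le_compat; first exact: Rle_refl.
  exact: Rmult_le_compat_l.
rewrite Hcard.
have Hc2 := consts_ii Hb0 HbnR H3 HNJ0 HQ0 HQN HL.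
have Hee : eta0 L = 1 / (5 * L) by [].
rewrite -Hee -/cc -/be in Hc2.
have : NJ * S * (NJ * (eta0 L / 2) * (L * L / INR b) + cc * Qc * (1 + be)) <= NJ * S * (cc * NJ).
  apply: Rmult_le_compat_l => //; nra.
nra.
Qed.
End Core.

Section Traj.
Variables (n d b T : nat) (eta : R).
Variables (gf : 'I_n -> vec d -> vec d) (h : vec d -> option R) (x0 : vec d).

Definition st (w : {ffun 'I_T -> draw n b}) (k : nat) : state d n :=
  foldl (saga_step eta gf h) (x0, fun _ => x0) (take k [seq w i | i <- enum 'I_T]).

Lemma saga_x_st w k : saga_x eta gf h x0 w k = (st w k).1.
Proof. by []. Qed.

Lemma st_succ w (t : 'I_T) : st w t.+1 = saga_step eta gf h (st w t) (w t).
Proof.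
rewrite /st (take_nth (w t)); last by rewrite size_map size_enum_ord.
rewrite foldl_rcons; congr saga_step.
by rewrite (nth_map t) ?size_enum_ord // nth_ord_enum.
Qed.

Lemma take_map_eq (A : Type) (f g : 'I_T -> A) (t : 'I_T) :
  (forall i : 'I_T, (i < t)%N -> f i = g i) ->
  take t [seq f i | i <- enum 'I_T] = take t [seq g i | i <- enum 'I_T].
Proof.
move=> H.
apply: (eq_from_nth (x0 := f t)); first by rewrite !size_take !size_map.
move=> j; rewrite size_take size_map size_enum_ord (ltn_ord t) => Hj.
have HjT : (j < T)%N by apply: (ltn_trans Hj).
rewrite !nth_take // (nth_map t) ?size_enum_ord // (nth_map t) ?size_enum_ord //.
apply: H; by rewrite nth_enum_ord.
Qed.

Lemma st_upd w (t : 'I_T) D : st (upd w t D) t = st w t.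
Proof.
rewrite /st (take_map_eq (f := fun i => upd w t D i) (g := fun i => w i)) //.
move=> i Hi; apply: upd_other; apply/eqP => Heq; move: Hi; by rewrite Heq ltnn.
Qed.



Lemma foldl_inv (P : state d n -> Prop) (l : seq (draw n b)) s :
  P s -> (forall s (D : draw n b), P (saga_step eta gf h s D)) -> P (foldl (saga_step eta gf h) s l).
Proof.
move=> Hs Hstep; elim: l s Hs => [|D l IH] s Hs //=.
by apply: IH; apply: Hstep.
Qed.
End Traj.

Lemma telescope (T : nat) (g P : nat -> R) :
  (forall t, (t < T)%N -> g t <= P t - P t.+1) ->
  \big[Rplus/0]_(k < T) g k <= P 0%N - P T.
Proof.
elim: T => [|T IH] H.
  rewrite big_ord0; lra.
rewrite big_ord_recr /=.
have IH' : \big[Rplus/0]_(k < T) g k <= P 0%N - P T.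
  by apply: IH => t Ht; apply: H; apply: ltnW.
have HT := H T (ltnSn T).
have E : \big[Rplus/0]_(i < T) g (widen_ord (leqnSn T) i) = \big[Rplus/0]_(k < T) g k by [].
rewrite E; lra.
Qed.

Section Main.
Variables (n d b T : nat) (L : R).
Variables (f : 'I_n -> vec d -> R) (gf : 'I_n -> vec d -> vec d) (h : vec d -> option R).
Variables (x0 : vec d) (a : R).
Hypothesis Hn : (1 <= n)%N.
Hypothesis Hb1 : (1 <= b)%N.
Hypothesis HBN : (b <= n)%N.
Hypothesis H3 : INR b * INR b * INR b = INR n * INR n.
Hypothesis HL : 0 < L.
Hypothesis Hgrad : forall i, has_gradient (f i) (gf i).
Hypothesis Hsm : forall i, L_smooth L (gf i).
Hypothesis Hprop : proper_fn h.
Hypothesis Hconv : convex_fn h.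
Hypothesis Hlsc : lsc_fn h.
Hypothesis Ha : h x0 = Some a.

Definition stw (w : {ffun 'I_T -> draw n b}) k := st (eta0 L) gf h x0 w k.

Lemma fin_st w k : h (stw w k).1 = Some (hval h (stw w k).1).
Proof.
rewrite /stw /st; apply: (foldl_inv (P := fun s : state d n => h s.1 = Some (hval h s.1))).
  by rewrite /= /hval Ha.
case=> x al [I J] /=; apply: prox_fin => //; exact: eta0_pos.
Qed.

Lemma card_draw_pos : 0 < INR #|{: draw n b}|.
Proof.
apply: lt_0_INR; apply/ltP; apply/card_gt0P.
have i0 : 'I_n := Ordinal Hn.
by exists ([ffun _ => i0], [ffun _ => i0]).
Qed.

Lemma step_sum (t : 'I_T) :
  \big[Rplus/0]_(w : {ffun 'I_T -> draw n b}) Psi b L f h (stw w t.+1)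
  <= \big[Rplus/0]_(w : {ffun 'I_T -> draw n b})
       (Psi b L f h (stw w t) - eta0 L / 2 * norm2 (grad_map (eta0 L) (gradavg gf) h (stw w t).1)).
Proof.
rewrite (eq_bigr (fun w => Psi b L f h (saga_step (eta0 L) gf h (stw w t) (w t)))); last first.
  by move=> w _; rewrite /stw st_succ.
have R0 := resample t (fun w => Psi b L f h (saga_step (eta0 L) gf h (stw w t) (w t))).
have E : \big[Rplus/0]_(F : {ffun 'I_T -> draw n b}) \big[Rplus/0]_(y : draw n b)
           Psi b L f h (saga_step (eta0 L) gf h (stw (upd F t y) t) (upd F t y t))
       = \big[Rplus/0]_(F : {ffun 'I_T -> draw n b}) \big[Rplus/0]_(y : draw n b)
           Psi b L f h (saga_step (eta0 L) gf h (stw F t) y).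
  apply: eq_bigr => F _; apply: eq_bigr => y _.
  by rewrite /stw st_upd upd_at.
rewrite E in R0.
have Hw : forall w : {ffun 'I_T -> draw n b},
  \big[Rplus/0]_(y : draw n b) Psi b L f h (saga_step (eta0 L) gf h (stw w t) y)
  <= INR #|{: draw n b}| * (Psi b L f h (stw w t) - eta0 L / 2 * norm2 (grad_map (eta0 L) (gradavg gf) h (stw w t).1)).
  move=> w.
  have Hf := fin_st w t.
  move: Hf; case: (stw w t) => x al /= Hf.
  exact: (core Hn Hb1 HBN H3 HL Hgrad Hsm Hprop Hconv Hlsc al Hf).
have := rsum_le (P := xpredT) (fun w _ => Hw w).
rewrite -R0 -rsum_scal => H.
have Hc := card_draw_pos.
apply: (Rmult_le_reg_l _ _ _ Hc).
exact: H.
Qed.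
End Main.
Unset Implicit Arguments.

Theorem theorem4 (n d b T : nat) (L : R)
  (f : 'I_n -> vec d -> R) (gf : 'I_n -> vec d -> vec d)
  (h : vec d -> option R) (x0 xs : vec d) :
  (1 <= n)%N -> (1 <= d)%N -> 0 < L ->
  (forall i, has_gradient (f i) (gf i)) ->
  (forall i, L_smooth L (gf i)) ->
  proper_fn h -> convex_fn h -> lsc_fn h -> closed_dom h ->
  is_global_min (favg f) h xs ->
  (b ^ 3 = n ^ 2)%N ->
  (1 <= T)%N ->
  forall a s, h x0 = Some a -> h xs = Some s ->
  Expect (fun w : ({ffun 'I_T -> draw n b} * 'I_T)%type =>
            norm2 (grad_map (1 / (5 * L)) (gradavg gf) h
                     (saga_x (1 / (5 * L)) gf h x0 w.1 w.2)))
  <= 50 * L * ((favg f x0 + a) - (favg f xs + s)) / (3 * INR T).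
Proof.
move=> Hn Hd HL Hgrad Hsm Hprop Hconv Hlsc Hcl Hmin Hb3 HT a s Ha Hs.
have E3 : (b * b * b = n * n)%N.
  by move: Hb3; rewrite !expnS expn0 !muln1 mulnA.
have Hb1 : (1 <= b)%N by nia.
have HBN : (b <= n)%N by nia.
have H3 : INR b * INR b * INR b = INR n * INR n by rewrite -!INR_muln E3.
pose G := fun (w : {ffun 'I_T -> draw n b}) (t : nat) =>
  norm2 (grad_map (eta0 L) (gradavg gf) h (stw L gf h x0 w t).1).
pose g := fun t : nat => \big[Rplus/0]_(w : {ffun 'I_T -> draw n b}) G w t.
pose P := fun t : nat => \big[Rplus/0]_(w : {ffun 'I_T -> draw n b}) Psi b L f h (stw L gf h x0 w t).
have He := eta0_pos HL.
have Htel : \big[Rplus/0]_(k < T) (eta0 L / 2 * g k) <= P 0%N - P T.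
  apply: (telescope (g := fun t => eta0 L / 2 * g t)) => t Ht.
  have := step_sum Hn Hb1 HBN H3 HL Hgrad Hsm Hprop Hconv Hlsc Ha (Ordinal Ht).
  have E : \big[Rplus/0]_(w : {ffun 'I_T -> draw n b})
     (Psi b L f h (stw L gf h x0 w t) - eta0 L / 2 * norm2 (grad_map (eta0 L) (gradavg gf) h (stw L gf h x0 w t).1))
     = P t - eta0 L / 2 * g t.
    by rewrite /P /g /G rsum_scal /Rminus -rsum_opp -rsum_split.
  rewrite /= E => H.
  have HP : P t.+1 <= P t - eta0 L / 2 * g t := H.
  lra.
have Hnum : \big[Rplus/0]_(p : ({ffun 'I_T -> draw n b} * 'I_T)%type)
     norm2 (grad_map (1 / (5 * L)) (gradavg gf) h (saga_x (1 / (5 * L)) gf h x0 p.1 p.2))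
   = \big[Rplus/0]_(k < T) g k.
  rewrite -(pair_bigA _ (fun w (k : 'I_T) => G w k)) exchange_big.
  by [].
set NO := INR #|{ffun 'I_T -> draw n b}|.
have HNO : 0 < NO.
  apply: lt_0_INR; apply/ltP; apply/card_gt0P.
  have i0 : 'I_n := Ordinal Hn.
  by exists [ffun _ => ([ffun _ => i0], [ffun _ => i0])].
have HP0 : P 0%N = NO * (favg f x0 + a).
  rewrite /P (eq_bigr (fun _ => favg f x0 + a)); first by rewrite rsum_const.
  move=> w _; rewrite /stw /st take0 /= /Psi /= /hval Ha /Sfun /=.
  have -> : vsub x0 x0 = (fun _ => 0).
    by apply: functional_extensionality => k; rewrite /vsub; ring.
  rewrite (eq_bigr (fun _ => 0)); last by move=> i _; rewrite /norm2 inner_zero_l.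
  rewrite rsum_const; ring.
have Hcc : 0 < cc n b L.
  have Hb0 : 1 <= INR b by apply: (le_INR 1); apply/leP.
  have Hn0 : 0 < INR n by apply: lt_0_INR; apply/ltP.
  rewrite /cc; apply: Rdiv_lt_0_compat; nra.
have HPT : NO * (favg f xs + s) <= P T.
  rewrite /P -rsum_const; apply: rsum_le => w _.
  have Hf := fin_st gf HL Hprop Hconv Hlsc Ha w T.
  have := Hmin (stw L gf h x0 w T).1; rewrite Hs Hf /=.
  rewrite /Psi => Hm.
  have := Sfun_ge0 (stw L gf h x0 w T) Hn.
  nra.
have HD : 0 <= (favg f x0 + a) - (favg f xs + s).
  have := Hmin x0; rewrite Hs Ha /=; lra.
have HTr : 1 <= INR T by apply: (le_INR 1); apply/leP.
rewrite /Expect Hnum card_prod INR_muln card_ord -/NO.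
rewrite -rsum_scal in Htel.
have Hsum : \big[Rplus/0]_(k < T) g k <= 10 * L * (NO * ((favg f x0 + a) - (favg f xs + s))).
  have Hi : eta0 L / 2 = / (10 * L) by rewrite /eta0; field; lra.
  rewrite Hi in Htel.
  have : \big[Rplus/0]_(k < T) g k = 10 * L * (/ (10 * L) * \big[Rplus/0]_(k < T) g k) by field; lra.
  move=> ->; apply: Rmult_le_compat_l; first lra.
  apply: Rle_trans Htel _; rewrite HP0; lra.
set D := (favg f x0 + a) - (favg f xs + s) in HD Hsum *.
apply: (Rle_trans _ (10 * L * (NO * D) / (NO * INR T))).
  apply: Rmult_le_compat_r => //; apply: Rlt_le; apply: Rinv_0_lt_compat; nra.
have -> : 10 * L * (NO * D) / (NO * INR T) = 10 * L * D / INR T by field; lra.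
have -> : 50 * L * D / (3 * INR T) = 50 / 3 * L * D / INR T by field; lra.
apply: Rmult_le_compat_r; first (apply: Rlt_le; apply: Rinv_0_lt_compat; lra).
nra.
Qed.
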